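(* Let $R$ be a unital associative ring and $$A=\begin{pmatrix}1&1&1\\1&a&b\\1&c&d\end{pmatrix}\in M_3(R).$$ Then all $1\times1$ and $2\times2$ submatrices of $A$ are invertible if and only if the elements $a,b,c,d,a-1,b-1,c-1,d-1,d-c,d-b,c-a,b-a$ and $db^{-1}-ca^{-1}$ are invertible in $R$. Furthermore, if all $1\times1$ and $2\times2$ submatrices of $A$ are invertible, then $$A\text{ is invertible}\iff (d-c)^{-1}(c-1)-(b-a)^{-1}(a-1)\in R^*,$$ $$J_2(A)\text{ is invertible}\iff (c-1)(d-c)^{-1}d-(a-1)(b-a)^{-1}b\in R^*.$$ In particular, $A\in\widehat{\cal S}$ if and only if the $15$ elements $a,b,c,d,a-1,b-1,c-1,d-1,d-c,d-b,c-a,b-a,db^{-1}-ca^{-1}$, $(d-c)^{-1}(c-1)-(b-a)^{-1}(a-1)$ and $(c-1)(d-c)^{-1}d-(a-1)(b-a)^{-1}b$ are invertible in $R$.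
   Context: $R^*$ denotes the units of $R$. For $M\in M_3(R)$ with all entries in $R^*$, $J_2(M)$ is the matrix with $(j,k)$-entry $(M_{kj})^{-1}$. ${\cal S}=\{M\in M_3(R):$ all square submatrices of $M$ are invertible and $J_2(M)$ is invertible$\}$, $\widehat M_3(R)$ is the set of $3\times3$ matrices whose first row and column consist of $1$'s, and $\widehat{\cal S}={\cal S}\cap\widehat M_3(R)$. *)

(* Defs.v *)
From HB Require Import structures.
From mathcomp Require Import all_boot all_order all_algebra.
Set Implicit Arguments. Unset Strict Implicit. Unset Printing Implicit Defensive.
Import GRing.Theory.
Local Open Scope ring_scope.

Section Defs.
Variable R : unitRingType.

Definition mx_invertible n (M : 'M[R]_n) : Prop :=
  exists N : 'M[R]_n, M *m N = 1%:M /\ N *m M = 1%:M.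

Definition all_sub_invertible (k m n : nat) (M : 'M[R]_(m, n)) : Prop :=
  forall (f : 'I_k -> 'I_m) (g : 'I_k -> 'I_n),
    (forall i j : 'I_k, (i < j)%N -> (f i < f j)%N) ->
    (forall i j : 'I_k, (i < j)%N -> (g i < g j)%N) ->
    mx_invertible (mxsub f g M).

Definition J2 (M : 'M[R]_3) : 'M[R]_3 := \matrix_(j, k) (M k j)^-1.

Definition in_S (M : 'M[R]_3) : Prop :=
  [/\ all_sub_invertible 1 M, all_sub_invertible 2 M, all_sub_invertible 3 M
    & mx_invertible (J2 M)].

Definition in_hatM3 (M : 'M[R]_3) : Prop :=
  forall i : 'I_3, M ord0 i = 1 /\ M i ord0 = 1.

Definition in_hatS (M : 'M[R]_3) : Prop := in_S M /\ in_hatM3 M.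

Definition Amx (a b c d : R) : 'M[R]_3 :=
  \matrix_(i < 3, j < 3)
    [fun ij : nat * nat => 1 with (1%N, 1%N) |-> a, (1%N, 2%N) |-> b,
                                   (2%N, 1%N) |-> c, (2%N, 2%N) |-> d]
    (nat_of_ord i, nat_of_ord j).

End Defs.

(* Main.v *)
Require Import Defs.
From mathcomp Require Import all_boot all_order all_algebra.
From mathcomp Require Import zify.
Set Implicit Arguments. Unset Strict Implicit. Unset Printing Implicit Defensive.
Import GRing.Theory.
Local Open Scope ring_scope.

Section H.
Variable R : unitRingType.

Definition mk2 (x y z w : R) : 'M[R]_2 :=
  \matrix_(i<2, j<2) nth 0 (nth [::] [:: [:: x; y]; [:: z; w]] i) j.
Definition mk3 (x00 x01 x02 x10 x11 x12 x20 x21 x22 : R) : 'M[R]_3 :=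
  \matrix_(i<3, j<3) nth 0 (nth [::] [:: [:: x00; x01; x02]; [:: x10; x11; x12]; [:: x20; x21; x22]] i) j.

Ltac mxsimp := rewrite ?(mul0r, mulr0, mul1r, mulr1, add0r, addr0, mulN1r, mulrN1, oppr0, subr0, sub0r, addNr, subrr).

Ltac mxcomp := apply/matrixP; case=> [[|[|[|?]]] ?]; case=> [[|[|[|?]]] ?];
  rewrite ?mxE ?big_ord_recl ?big_ord0 ?mxE /=; mxsimp; try done; try (by rewrite addrC).

Definition minv n (M : 'M[R]_n.+1) := exists N, M * N = 1 /\ N * M = 1.
Lemma minvE n (M : 'M[R]_n.+1) : mx_invertible M <-> minv M.
Proof. by []. Qed.

Lemma minv_of n (E F : 'M[R]_n.+1) : E * F = 1 -> F * E = 1 -> minv E.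
Proof. by move=> h1 h2; exists F. Qed.

Lemma minv_mull n (E M : 'M[R]_n.+1) : minv E -> (minv M <-> minv (E * M)).
Proof.
case=> F [EF FE]; split.
  case=> N [h1 h2]; exists (N * F); split.
    by rewrite -mulrA (mulrA M) h1 mul1r.
  by rewrite -mulrA (mulrA F) FE mul1r.
case=> K [h1 h2]; exists (K * E); split; last by rewrite -mulrA.
have hMK : M * K = F.
  by rewrite -[M]mul1r -FE -!mulrA (mulrA E) h1 mulr1.
by rewrite mulrA hMK.
Qed.

Lemma minv_mulr n (E M : 'M[R]_n.+1) : minv E -> (minv M <-> minv (M * E)).
Proof.
case=> F [EF FE]; split.
  case=> N [h1 h2]; exists (F * N); split.
    by rewrite -mulrA (mulrA E) EF mul1r.
  by rewrite -mulrA (mulrA N) h2 mul1r.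
case=> K [h1 h2]; exists (E * K); split; first by rewrite mulrA.
have hKM : K * M = F.
  by rewrite -[M]mulr1 -EF !mulrA -(mulrA K) h2 mul1r.
by rewrite -mulrA hKM.
Qed.

Lemma mk2_eta (M : 'M[R]_2) : M = mk2 (M ord0 ord0) (M ord0 ord_max) (M ord_max ord0) (M ord_max ord_max).
Proof. apply/matrixP; case=> [[|[|?]] ?] //; case=> [[|[|?]] ?] //; rewrite !mxE /=; f_equal; exact: val_inj. Qed.

Lemma mk2_mul x y z w x' y' z' w' : mk2 x y z w * mk2 x' y' z' w' =
  mk2 (x*x' + y*z') (x*y'+y*w') (z*x'+w*z') (z*y'+w*w').
Proof. rewrite -mulmxE; mxcomp. Qed.

Lemma mk2_1 : (1 : 'M[R]_2) = mk2 1 0 0 1.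
Proof. mxcomp. Qed.

Lemma mk2_inj x y z w x' y' z' w' : mk2 x y z w = mk2 x' y' z' w' ->
  [/\ x = x', y = y', z = z' & w = w'].
Proof.
move=> h; split.
- by have := congr1 (fun M : 'M[R]_2 => M ord0 ord0) h; rewrite !mxE.
- by have := congr1 (fun M : 'M[R]_2 => M ord0 ord_max) h; rewrite !mxE.
- by have := congr1 (fun M : 'M[R]_2 => M ord_max ord0) h; rewrite !mxE.
- by have := congr1 (fun M : 'M[R]_2 => M ord_max ord_max) h; rewrite !mxE.
Qed.

Lemma G6 u : minv (mk2 1 0 0 u) <-> u \is a GRing.unit.
Proof.
split.
  case=> N [h1 h2]; rewrite (mk2_eta N) !mk2_mul mk2_1 in h1 h2.
  case/mk2_inj: h1 => _ _ _; case/mk2_inj: h2 => _ _ _; mxsimp => h2 h1.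
  by apply/unitrP; exists (N ord_max ord_max).
move=> hu; exists (mk2 1 0 0 u^-1); rewrite !mk2_mul mk2_1; mxsimp.
by rewrite mulrV // mulVr.
Qed.

Ltac mk2s := rewrite ?mk2_mul ?mk2_1; mxsimp.

Lemma G5a x y : minv (mk2 1 1 x y) <-> (y - x) \is a GRing.unit.
Proof.
rewrite (@minv_mulr 1 (mk2 1 (-1) 0 1) (mk2 1 1 x y)); last first.
  apply: (minv_of (F := mk2 1 1 0 1)); mk2s; by rewrite ?addNr ?subrr.
rewrite (@minv_mull 1 (mk2 1 0 (-x) 1)); last first.
  apply: (minv_of (F := mk2 1 0 x 1)); mk2s; by rewrite ?addNr ?subrr.
mk2s. rewrite addrC. exact: G6.
Qed.

Lemma G5b x y : minv (mk2 1 x 1 y) <-> (y - x) \is a GRing.unit.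
Proof.
rewrite (@minv_mull 1 (mk2 1 0 (-1) 1) (mk2 1 x 1 y)); last first.
  apply: (minv_of (F := mk2 1 0 1 1)); mk2s; by rewrite ?addNr ?subrr.
rewrite (@minv_mulr 1 (mk2 1 (-x) 0 1)); last first.
  apply: (minv_of (F := mk2 1 x 0 1)); mk2s; by rewrite ?addNr ?subrr.
mk2s. rewrite addrC. exact: G6.
Qed.


Lemma G4 x y : minv (mk2 x 1 y 1) <-> (y - x) \is a GRing.unit.
Proof.
rewrite (@minv_mulr 1 (mk2 0 1 1 0) (mk2 x 1 y 1)); last first.
  by apply: (minv_of (F := mk2 0 1 1 0)); mk2s.
mk2s; exact: G5b.
Qed.

Lemma G4' x y : minv (mk2 x y 1 1) <-> (y - x) \is a GRing.unit.
Proof.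
rewrite (@minv_mull 1 (mk2 0 1 1 0) (mk2 x y 1 1)); last first.
  by apply: (minv_of (F := mk2 0 1 1 0)); mk2s.
mk2s; exact: G5a.
Qed.

Lemma G2col x y z w : minv (mk2 x y z w) <-> minv (mk2 x (y - x) z (w - z)).
Proof.
rewrite (@minv_mulr 1 (mk2 1 (-1) 0 1) (mk2 x y z w)); last first.
  apply: (minv_of (F := mk2 1 1 0 1)); mk2s; by rewrite ?addNr ?subrr.
by mk2s; rewrite ![- _ + _]addrC.
Qed.

Lemma G2row x y z w : minv (mk2 x y z w) <-> minv (mk2 x y (z - x) (w - y)).
Proof.
rewrite (@minv_mull 1 (mk2 1 0 (-1) 1) (mk2 x y z w)); last first.
  apply: (minv_of (F := mk2 1 0 1 1)); mk2s; by rewrite ?addNr ?subrr.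
by mk2s; rewrite ![- _ + _]addrC.
Qed.

Lemma G3L e f x y z w : e \is a GRing.unit -> f \is a GRing.unit ->
  minv (mk2 x y z w) <-> minv (mk2 (e*x) (e*y) (f*z) (f*w)).
Proof.
move=> he hf.
rewrite (@minv_mull 1 (mk2 e 0 0 f) (mk2 x y z w)); last first.
  apply: (minv_of (F := mk2 e^-1 0 0 f^-1)); mk2s; by rewrite ?mulrV ?mulVr.
by mk2s.
Qed.

Lemma G3R e f x y z w : e \is a GRing.unit -> f \is a GRing.unit ->
  minv (mk2 x y z w) <-> minv (mk2 (x*e) (y*f) (z*e) (w*f)).
Proof.
move=> he hf.
rewrite (@minv_mulr 1 (mk2 e 0 0 f) (mk2 x y z w)); last first.
  apply: (minv_of (F := mk2 e^-1 0 0 f^-1)); mk2s; by rewrite ?mulrV ?mulVr.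
by mk2s.
Qed.

Lemma Gc a b c d : a \is a GRing.unit -> b \is a GRing.unit ->
  minv (mk2 a b c d) <-> (d * b^-1 - c * a^-1) \is a GRing.unit.
Proof.
move=> ha hb; have ha' : a^-1 \is a GRing.unit by rewrite unitrV.
have hb' : b^-1 \is a GRing.unit by rewrite unitrV.
rewrite (@G3R a^-1 b^-1 a b c d ha' hb') !mulrV //; exact: G5a.
Qed.

Lemma M1 (M : 'M[R]_1) : mx_invertible M <-> M ord0 ord0 \is a GRing.unit.
Proof.
split.
  case=> N [h1 h2]; apply/unitrP; exists (N ord0 ord0).
  have := congr1 (fun X : 'M[R]_1 => X ord0 ord0) h1.
  have := congr1 (fun X : 'M[R]_1 => X ord0 ord0) h2.
  by rewrite !mxE !big_ord1 /= => -> ->.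
move=> hu; exists (\matrix_(i,j) (M ord0 ord0)^-1); split;
  apply/matrixP=> i j; rewrite !ord1 !mxE big_ord1 !mxE /=;
  by rewrite ?mulrV ?mulVr.
Qed.

Ltac mxcomp3 := apply/matrixP; case=> [[|[|[|?]]] ?] //; case=> [[|[|[|?]]] ?] //;
  rewrite ?(mxE, big_ord_recl, big_ord0) /=; mxsimp; try done; try (by rewrite addrC).

Lemma G1 p q r s : minv (mk3 1 1 1 1 p q 1 r s) <-> minv (mk3 1 0 0 0 (p-1) (q-1) 0 (r-1) (s-1)).
Proof.
rewrite (@minv_mull 2 (mk3 1 0 0 (-1) 1 0 (-1) 0 1)); last first.
  apply: (minv_of (F := mk3 1 0 0 1 1 0 1 0 1)); rewrite -mulmxE; mxcomp3.
rewrite (@minv_mulr 2 (mk3 1 (-1) (-1) 0 1 0 0 0 1)); last first.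
  apply: (minv_of (F := mk3 1 1 1 0 1 0 0 0 1)); rewrite -mulmxE; mxcomp3.
have -> // : mk3 1 0 0 (-1) 1 0 (-1) 0 1 * mk3 1 1 1 1 p q 1 r s * mk3 1 (-1) (-1) 0 1 0 0 0 1
  = mk3 1 0 0 0 (p-1) (q-1) 0 (r-1) (s-1).
rewrite -!mulmxE; mxcomp3.
Qed.

Definition i0 : 'I_3 := @Ordinal 3 0 isT.
Definition i1 : 'I_3 := @Ordinal 3 1 isT.
Definition i2 : 'I_3 := @Ordinal 3 2 isT.

Lemma mul3E (A B : 'M[R]_3) i j : (A * B) i j = A i i0 * B i0 j + A i i1 * B i1 j + A i i2 * B i2 j.
Proof.
rewrite -mulmxE mxE !big_ord_recl big_ord0 addr0 addrA.
by congr (_ * _ + _ * _ + _ * _); f_equal; apply: val_inj.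
Qed.

Lemma mk3E x00 x01 x02 x10 x11 x12 x20 x21 x22 :
  let M := mk3 x00 x01 x02 x10 x11 x12 x20 x21 x22 in
  [/\ M i1 i0 = x10, M i1 i1 = x11, M i1 i2 = x12, M i2 i0 = x20 &
   [/\ M i2 i1 = x21, M i2 i2 = x22, M i0 i1 = x01 & M i0 i2 = x02]].
Proof. by rewrite /= !mxE. Qed.

Lemma one3E : let M := (1 : 'M[R]_3) in
  [/\ M i1 i1 = 1, M i1 i2 = 0, M i2 i1 = 0 & M i2 i2 = 1].
Proof. by rewrite /= !mxE. Qed.

Lemma Gblk p q r s : minv (mk3 1 0 0 0 p q 0 r s) <-> minv (mk2 p q r s).
Proof.
split.
  case=> N [h1 h2]; exists (mk2 (N i1 i1) (N i1 i2) (N i2 i1) (N i2 i2)).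
  have e1 := fun i j => congr1 (fun X : 'M[R]_3 => X i j) h1.
  have e2 := fun i j => congr1 (fun X : 'M[R]_3 => X i j) h2.
  have [a1 a2 a3 a4] := one3E.
  have [b1 b2 b3 b4 [b5 b6 b7 b8]] := mk3E 1 0 0 0 p q 0 r s.
  have f11 := e1 i1 i1; have f12 := e1 i1 i2; have f21 := e1 i2 i1; have f22 := e1 i2 i2.
  have g11 := e2 i1 i1; have g12 := e2 i1 i2; have g21 := e2 i2 i1; have g22 := e2 i2 i2.
  rewrite /= !mul3E ?b1 ?b2 ?b3 ?b4 ?b5 ?b6 ?b7 ?b8 ?a1 ?a2 ?a3 ?a4 in f11 f12 f21 f22 g11 g12 g21 g22.
  rewrite !(mul0r, mulr0, add0r) in f11 f12 f21 f22 g11 g12 g21 g22.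
  by rewrite !mk2_mul mk2_1 f11 f12 f21 f22 g11 g12 g21 g22.
case=> K; rewrite (mk2_eta K) !mk2_mul mk2_1 => -[/mk2_inj[h1 h2 h3 h4] /mk2_inj[h5 h6 h7 h8]].
exists (mk3 1 0 0 0 (K ord0 ord0) (K ord0 ord_max) 0 (K ord_max ord0) (K ord_max ord_max)).
by split; rewrite -mulmxE; mxcomp3.
Qed.


Lemma Amx_mk3 (a b c d : R) : Amx a b c d = mk3 1 1 1 1 a b 1 c d.
Proof. mxcomp3. Qed.

Lemma J2_mk3 (a b c d : R) : J2 (Amx a b c d) = mk3 1 1 1 1 a^-1 c^-1 1 b^-1 d^-1.
Proof. rewrite /J2; mxcomp3; by rewrite invr1. Qed.

Lemma subsub1 x y : (y - 1) - (x - 1) = y - x :> R.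
Proof. by rewrite opprB addrA subrK. Qed.

Lemma Iaux (x y : R) : x \is a GRing.unit -> y \is a GRing.unit ->
  y^-1 - x^-1 = y^-1 * (x - y) * x^-1.
Proof. by move=> hx hy; rewrite mulrBr mulrBl mulrK // mulVr // mul1r. Qed.

Lemma I1 (x y : R) : x \is a GRing.unit -> y \is a GRing.unit -> (y - x) \is a GRing.unit ->
  (y^-1 - x^-1) * (x * (x - y)^-1 * y) = 1.
Proof.
move=> hx hy hyx; have hxy : (x - y) \is a GRing.unit by rewrite -opprB unitrN.
rewrite Iaux // !mulrA mulrVK // mulrK // mulVr //.
Qed.

Lemma I2 (x y : R) : x \is a GRing.unit ->
  (x^-1 - 1) * (x * (x - y)^-1 * y) = (x - 1) * (y - x)^-1 * y.
Proof.
move=> hx; rewrite !mulrA mulrBl mulVr // mul1r -[x - y]opprB invrN mulrN mulNr.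
by rewrite -[x - 1]opprB !mulNr.
Qed.

Lemma LA (a b c d : R) : (b - a) \is a GRing.unit -> (d - c) \is a GRing.unit ->
  minv (mk3 1 1 1 1 a b 1 c d) <-> ((d - c)^-1 * (c - 1) - (b - a)^-1 * (a - 1)) \is a GRing.unit.
Proof.
move=> h1 h2; rewrite G1 Gblk G2col !subsub1.
have h1' : (b - a)^-1 \is a GRing.unit by rewrite unitrV.
have h2' : (d - c)^-1 \is a GRing.unit by rewrite unitrV.
rewrite (@G3L _ _ _ _ _ _ h1' h2') !mulVr //; exact: G4.
Qed.

Lemma LJ (a b c d : R) : a \is a GRing.unit -> b \is a GRing.unit -> c \is a GRing.unit ->
  d \is a GRing.unit -> (b - a) \is a GRing.unit -> (d - c) \is a GRing.unit ->
  minv (mk3 1 1 1 1 a^-1 c^-1 1 b^-1 d^-1) <->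
   ((c - 1) * (d - c)^-1 * d - (a - 1) * (b - a)^-1 * b) \is a GRing.unit.
Proof.
move=> ha hb hc hd h1 h2; rewrite G1 Gblk G2row !subsub1.
have e1 : (a * (a - b)^-1 * b) \is a GRing.unit.
  by rewrite unitrMl // unitrMr // unitrV -opprB unitrN.
have e2 : (c * (c - d)^-1 * d) \is a GRing.unit.
  by rewrite unitrMl // unitrMr // unitrV -opprB unitrN.
rewrite (@G3R _ _ _ _ _ _ e1 e2) !I1 // !I2 //; exact: G4'.
Qed.

Lemma pairs (x y : nat) : (x < y)%N -> (y < 3)%N ->
  (x = 0%N /\ y = 1%N) \/ (x = 0%N /\ y = 2%N) \/ (x = 1%N /\ y = 2%N).
Proof. lia. Qed.

Lemma sub2_all (a b c d : R) :
  a \is a GRing.unit -> b \is a GRing.unit -> c \is a GRing.unit -> d \is a GRing.unit ->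
  (a - 1) \is a GRing.unit -> (b - 1) \is a GRing.unit -> (c - 1) \is a GRing.unit ->
  (d - 1) \is a GRing.unit -> (d - c) \is a GRing.unit -> (d - b) \is a GRing.unit ->
  (c - a) \is a GRing.unit -> (b - a) \is a GRing.unit ->
  (d * b^-1 - c * a^-1) \is a GRing.unit ->
  all_sub_invertible 2 (Amx a b c d).
Proof.
move=> ha hb hc hd h1 h2 h3 h4 h5 h6 h7 h8 h9 f g hf hg.
rewrite Amx_mk3 minvE (mk2_eta (mxsub _ _ _)) !mxE.
have [[-> ->]|[[-> ->]|[-> ->]]] := pairs (hf ord0 ord_max isT) (ltn_ord (f ord_max));
have [[-> ->]|[[-> ->]|[-> ->]]] := pairs (hg ord0 ord_max isT) (ltn_ord (g ord_max)) => /=;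
  first [ apply/G5a; done | apply/G5b; done | apply/(Gc c d ha hb); done ].
Qed.

Lemma sub1_all (a b c d : R) :
  a \is a GRing.unit -> b \is a GRing.unit -> c \is a GRing.unit -> d \is a GRing.unit ->
  all_sub_invertible 1 (Amx a b c d).
Proof.
move=> ha hb hc hd f g _ _; apply/M1; rewrite Amx_mk3 !mxE.
case: (f ord0) => [[|[|[|?]]] ?] //; case: (g ord0) => [[|[|[|?]]] ?] //=; exact: unitr1.
Qed.

Definition pick2 (x y : 'I_3) : 'I_2 -> 'I_3 := fun k => if (k : nat) == 0%N then x else y.

Lemma mono_pick2 (x y : 'I_3) : (x < y)%N -> forall i j : 'I_2, (i < j)%N -> (pick2 x y i < pick2 x y j)%N.
Proof. by move=> hxy [[|[|?]] ?] [[|[|?]] ?]. Qed.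

Lemma use2 (M : 'M[R]_3) (x y z w : 'I_3) : (x < y)%N -> (z < w)%N -> all_sub_invertible 2 M ->
  minv (mk2 (M x z) (M x w) (M y z) (M y w)).
Proof.
move=> hxy hzw /(_ (pick2 x y) (pick2 z w) (mono_pick2 hxy) (mono_pick2 hzw)).
by rewrite minvE (mk2_eta (mxsub _ _ _)) !mxE.
Qed.

Lemma use1 (M : 'M[R]_3) (x y : 'I_3) : all_sub_invertible 1 M -> M x y \is a GRing.unit.
Proof.
move=> /(_ (fun _ => x) (fun _ => y)) h.
have mono : forall (h : 'I_1 -> 'I_3) (i j : 'I_1), (i < j)%N -> (h i < h j)%N.
  by move=> h' [[|//] ?] [[|//] ?].
by move: (h (mono _) (mono _)) => /M1; rewrite mxE.
Qed.

Lemma mono3 (f : 'I_3 -> 'I_3) : (forall i j : 'I_3, (i < j)%N -> (f i < f j)%N) -> forall i, f i = i.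
Proof.
move=> hf i; apply: val_inj.
have h1 := hf i0 i1 isT; have h2 := hf i1 i2 isT; have h3 := ltn_ord (f i2).
case: i => [[|[|[|?]]] Hi] //=.
- have -> : Ordinal Hi = i0 by apply: val_inj.
  lia.
- have -> : Ordinal Hi = i1 by apply: val_inj.
  lia.
- have -> : Ordinal Hi = i2 by apply: val_inj.
  lia.
Qed.

Lemma sub3 (M : 'M[R]_3) : all_sub_invertible 3 M <-> mx_invertible M.
Proof.
split.
  move=> /(_ id id) h; rewrite -(mxsub_id M); exact: h.
move=> hM f g hf hg.
have -> : mxsub f g M = M by apply/matrixP=> i j; rewrite mxE (mono3 hf) (mono3 hg).
exact: hM.
Qed.

End H.

Unset Implicit Arguments.
Set Strict Implicit.

Theorem lemma7 (R : unitRingType) (a b c d : R) :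
  let A := Amx a b c d in
  let U := fun x : R => x \is a GRing.unit in
  ((all_sub_invertible 1 A /\ all_sub_invertible 2 A) <->
     (U a /\ U b /\ U c /\ U d /\
      U (a - 1) /\ U (b - 1) /\ U (c - 1) /\ U (d - 1) /\
      U (d - c) /\ U (d - b) /\ U (c - a) /\ U (b - a) /\
      U (d * b^-1 - c * a^-1))) /\
  (all_sub_invertible 1 A -> all_sub_invertible 2 A ->
     (mx_invertible A <->
        U ((d - c)^-1 * (c - 1) - (b - a)^-1 * (a - 1))) /\
     (mx_invertible (J2 A) <->
        U ((c - 1) * (d - c)^-1 * d - (a - 1) * (b - a)^-1 * b))) /\
  (in_hatS A <->
     (U a /\ U b /\ U c /\ U d /\
      U (a - 1) /\ U (b - 1) /\ U (c - 1) /\ U (d - 1) /\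
      U (d - c) /\ U (d - b) /\ U (c - a) /\ U (b - a) /\
      U (d * b^-1 - c * a^-1) /\
      U ((d - c)^-1 * (c - 1) - (b - a)^-1 * (a - 1)) /\
      U ((c - 1) * (d - c)^-1 * d - (a - 1) * (b - a)^-1 * b))).
Proof.
move=> A U; rewrite /U /A.
have P1 : (all_sub_invertible 1 (Amx a b c d) /\ all_sub_invertible 2 (Amx a b c d)) <->
     (a \is a GRing.unit /\ b \is a GRing.unit /\ c \is a GRing.unit /\ d \is a GRing.unit /\
      (a - 1) \is a GRing.unit /\ (b - 1) \is a GRing.unit /\ (c - 1) \is a GRing.unit /\
      (d - 1) \is a GRing.unit /\
      (d - c) \is a GRing.unit /\ (d - b) \is a GRing.unit /\ (c - a) \is a GRing.unit /\
      (b - a) \is a GRing.unit /\ (d * b^-1 - c * a^-1) \is a GRing.unit).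
  split.
    case=> s1 s2.
    have ha := use1 i1 i1 s1; have hb := use1 i1 i2 s1.
    have hc := use1 i2 i1 s1; have hd := use1 i2 i2 s1.
    rewrite Amx_mk3 !mxE /= in ha hb hc hd.
    have u1 := use2 (x := i0) (y := i1) (z := i0) (w := i1) isT isT s2.
    have u2 := use2 (x := i0) (y := i1) (z := i0) (w := i2) isT isT s2.
    have u3 := use2 (x := i0) (y := i2) (z := i0) (w := i1) isT isT s2.
    have u4 := use2 (x := i0) (y := i2) (z := i0) (w := i2) isT isT s2.
    have u5 := use2 (x := i0) (y := i2) (z := i1) (w := i2) isT isT s2.
    have u6 := use2 (x := i1) (y := i2) (z := i0) (w := i2) isT isT s2.
    have u7 := use2 (x := i1) (y := i2) (z := i0) (w := i1) isT isT s2.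
    have u8 := use2 (x := i0) (y := i1) (z := i1) (w := i2) isT isT s2.
    have u9 := use2 (x := i1) (y := i2) (z := i1) (w := i2) isT isT s2.
    rewrite Amx_mk3 !mxE /= in u1 u2 u3 u4 u5 u6 u7 u8 u9.
    move/G5a: u1 => u1; move/G5a: u2 => u2; move/G5a: u3 => u3; move/G5a: u4 => u4.
    move/G5a: u5 => u5; move/G5b: u6 => u6; move/G5b: u7 => u7; move/G5a: u8 => u8.
    move/(Gc c d ha hb): u9 => u9.
    by do !split.
  case=> ha [hb [hc [hd [h1 [h2 [h3 [h4 [h5 [h6 [h7 [h8 h9]]]]]]]]]]].
  split; [exact: sub1_all | exact: sub2_all].
have P2 : all_sub_invertible 1 (Amx a b c d) -> all_sub_invertible 2 (Amx a b c d) ->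
  (mx_invertible (Amx a b c d) <->
        ((d - c)^-1 * (c - 1) - (b - a)^-1 * (a - 1)) \is a GRing.unit) /\
  (mx_invertible (J2 (Amx a b c d)) <->
        ((c - 1) * (d - c)^-1 * d - (a - 1) * (b - a)^-1 * b) \is a GRing.unit).
  move=> s1 s2.
  have [ha [hb [hc [hd [h1 [h2 [h3 [h4 [h5 [h6 [h7 [h8 h9]]]]]]]]]]]] := proj1 P1 (conj s1 s2).
  split.
    rewrite Amx_mk3 minvE; exact: LA.
  rewrite J2_mk3 minvE; exact: LJ.
split; first exact: P1.
split; first exact: P2.
have hat : in_hatM3 (Amx a b c d).
  by move=> i; rewrite Amx_mk3 !mxE; case: i => [[|[|[|?]]] ?].
split.
  case=> -[s1 s2 s3 sJ] _.
  have [ha [hb [hc [hd [h1 [h2 [h3 [h4 [h5 [h6 [h7 [h8 h9]]]]]]]]]]]] := proj1 P1 (conj s1 s2).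
  have [PA PJ] := P2 s1 s2.
  by do !split => //; [apply/PA/sub3 | apply/PJ].
case=> ha [hb [hc [hd [h1 [h2 [h3 [h4 [h5 [h6 [h7 [h8 [h9 [hA hJ]]]]]]]]]]]]].
have [s1 s2] := proj2 P1 (conj ha (conj hb (conj hc (conj hd (conj h1 (conj h2 (conj h3
   (conj h4 (conj h5 (conj h6 (conj h7 (conj h8 h9)))))))))))).
have [PA PJ] := P2 s1 s2.
split=> //; split => //; [apply/sub3/PA | apply/PJ] => //.
Qed.
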